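(* Let $n\ge 1$ and let $a=(a_1,\dots,a_n)$ be a good sequence of $[n]$. Then: (1) the sequence $b=(b_1,\dots,b_n)$ with $b_i=n+1-a_i$ is a good sequence; (2) if $a_{2l+1}\ge \lceil \frac{n+1}{2}\rceil$ for all $l$ with $2l+1\in[n]$, then the sequence $b$ defined by $b_{2l+1}=a_{2l+1}-\lfloor \frac n2\rfloor$ (for $2l+1\in[n]$) and $b_{2l}=a_{2l}+\lfloor\frac{n+1}{2}\rfloor$ (for $2l\in[n]$) is a good sequence; (3) if $a_{2l+1}\le \lfloor \frac{n+1}{2}\rfloor$ for all $l$ with $2l+1\in[n]$, then the sequence $b$ defined by $b_{2l+1}=a_{2l+1}+\lfloor \frac n2\rfloor$ (for $2l+1\in[n]$) and $b_{2l}=a_{2l}-\lfloor\frac{n+1}{2}\rfloor$ (for $2l\in[n]$) is a good sequence.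
   Context: $[n]=\{1,2,\dots,n\}$. A permutation $a=(a_1,\dots,a_n)$ of $[n]$ is a good sequence if the differences $|a_2-a_1|,\dots,|a_n-a_{n-1}|$ are pairwise distinct and one of the following holds: (i) $a_{2l+1}\ge\lceil\frac{n+1}{2}\rceil$ and $a_{2l}<\lceil\frac{n+1}{2}\rceil$ whenever the indices $2l+1,2l$ lie in $[n]$; or (ii) $a_{2l+1}\le\lfloor\frac{n+1}{2}\rfloor$ and $a_{2l}>\lfloor\frac{n+1}{2}\rfloor$ whenever the indices $2l+1,2l$ lie in $[n]$. (Here $l\ge 0$ is an integer, so odd positions include position $1$.) *)

(* Defs.v *)
From mathcomp Require Import all_boot.
Set Implicit Arguments. Unset Strict Implicit. Unset Printing Implicit Defensive.

(* A sequence a = (a_1,...,a_n) is a list of naturals; a_p (1-based) is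
   [ith a p] = nth 0 a (p-1). *)
Definition ith (a : seq nat) (p : nat) : nat := nth 0 a p.-1.

Definition absd (x y : nat) : nat := (x - y) + (y - x).

(* ceil((n+1)/2) and floor((n+1)/2), floor(n/2) *)
Definition ceil_half1 (n : nat) : nat := (n + 2) %/ 2.
Definition floor_half1 (n : nat) : nat := (n + 1) %/ 2.
Definition floor_half (n : nat) : nat := n %/ 2.

Definition is_perm_n (n : nat) (a : seq nat) : Prop := perm_eq a (iota 1 n).

Definition diffs (n : nat) (a : seq nat) : seq nat :=
  [seq absd (ith a p.+1) (ith a p) | p <- iota 1 n.-1].

Definition cond_i (n : nat) (a : seq nat) : Prop :=
  forall p, 1 <= p <= n ->
    (odd p -> ceil_half1 n <= ith a p) /\ (~~ odd p -> ith a p < ceil_half1 n).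

Definition cond_ii (n : nat) (a : seq nat) : Prop :=
  forall p, 1 <= p <= n ->
    (odd p -> ith a p <= floor_half1 n) /\ (~~ odd p -> floor_half1 n < ith a p).

Definition good (n : nat) (a : seq nat) : Prop :=
  is_perm_n n a /\ uniq (diffs n a) /\ (cond_i n a \/ cond_ii n a).

(* Main.v *)
Require Import Defs.
From mathcomp Require Import all_boot.
From Stdlib Require Import Lia.
From mathcomp Require Import zify.
Set Implicit Arguments. Unset Strict Implicit.

Definition Dd (b : seq nat) p := absd (ith b p.+1) (ith b p).

Lemma halves n : floor_half n + floor_half1 n = n /\ ceil_half1 n = (floor_half n).+1
  /\ floor_half n <= floor_half1 n <= (floor_half n).+1.
Proof. rewrite /floor_half /floor_half1 /ceil_half1; lia. Qed.

Lemma good_intro n b :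
  size b = n ->
  (forall p, 1 <= p <= n -> 1 <= ith b p <= n) ->
  (forall p q, 1 <= p <= n -> 1 <= q <= n -> ith b p = ith b q -> p = q) ->
  (forall p q, 1 <= p < n -> 1 <= q < n -> Dd b p = Dd b q -> p = q) ->
  cond_i n b \/ cond_ii n b -> good n b.
Proof.
move=> Hs Hr Hi Hd Hc; split; last split; last exact: Hc.
- have ub : uniq b.
    apply/(uniqP 0) => i j; rewrite !inE => hi hj hij.
    have := Hi i.+1 j.+1; rewrite /ith /= => h.
    have : i.+1 = j.+1 by apply: h => //; rewrite Hs in hi hj; lia.
    by case.
  have sub : {subset b <= iota 1 n}.
    move=> x /(nthP 0) [i hi <-]; rewrite mem_iota.
    rewrite Hs in hi.
    have := Hr i.+1; rewrite /ith /= => h; have := h ltac:(lia); lia.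
  have hsz : size (iota 1 n) <= size b by rewrite size_iota Hs.
  have [_ eqm] := uniq_min_size ub sub hsz.
  by apply: uniq_perm => //; apply: iota_uniq.
- rewrite /diffs map_inj_in_uniq ?iota_uniq //.
  move=> x y; rewrite !mem_iota => hx hy; apply: Hd; lia.
Qed.

Lemma good_elim n a : good n a ->
  [/\ size a = n,
   (forall p, 1 <= p <= n -> 1 <= ith a p <= n),
   (forall p q, 1 <= p <= n -> 1 <= q <= n -> ith a p = ith a q -> p = q) &
   (forall p q, 1 <= p < n -> 1 <= q < n -> Dd a p = Dd a q -> p = q)].
Proof.
case=> hp [hd _].
have hs : size a = n by rewrite (perm_size hp) size_iota.
have ua : uniq a by rewrite (perm_uniq hp) iota_uniq.
split => //.
- move=> p hp1; have : ith a p \in iota 1 n.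
    by rewrite -(perm_mem hp) /ith mem_nth // hs; lia.
  rewrite mem_iota; lia.
- move=> p q hp1 hq1 h; have := uniqP 0 ua p.-1 q.-1; rewrite !inE hs => H.
  have := H ltac:(lia) ltac:(lia) h; lia.
- move=> p q hp1 hq1 h.
  have := uniqP 0 hd p.-1 q.-1; rewrite !inE /diffs size_map size_iota => H.
  have := H ltac:(lia) ltac:(lia).
  rewrite !(nth_map 0) ?size_iota; try lia.
  rewrite !nth_iota; try lia.
  have e1 : 1 + p.-1 = p by lia.
  have e2 : 1 + q.-1 = q by lia.
  rewrite e1 e2 => /(_ h); lia.
Qed.

Lemma ith_iota (G : nat -> nat) n p : 1 <= p <= n ->
  ith [seq G i.+1 | i <- iota 0 n] p = G p.
Proof.
move=> hp; rewrite /ith (nth_map 0) ?size_iota; last lia.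
rewrite nth_iota; last lia. congr G; lia.
Qed.

Lemma ith_map (f : nat -> nat) a n p : size a = n -> 1 <= p <= n ->
  ith [seq f x | x <- a] p = f (ith a p).
Proof. move=> hs hp; rewrite /ith (nth_map 0) //; lia. Qed.

Theorem lemma1 (n : nat) (a : seq nat) :
  1 <= n -> good n a ->
  good n [seq n.+1 - x | x <- a]
  /\ ((forall p, 1 <= p <= n -> odd p -> ceil_half1 n <= ith a p) ->
      good n [seq (if odd i.+1 then ith a i.+1 - floor_half n
                   else ith a i.+1 + floor_half1 n) | i <- iota 0 n])
  /\ ((forall p, 1 <= p <= n -> odd p -> ith a p <= floor_half1 n) ->
      good n [seq (if odd i.+1 then ith a i.+1 + floor_half n
                   else ith a i.+1 - floor_half1 n) | i <- iota 0 n]).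
Proof.
move=> hn hg.
have [hs hr hi hd] := good_elim hg.
have hc : cond_i n a \/ cond_ii n a by case: hg => _ [].
have [h1 [h2 h3]] := halves n.
move: h1 h2 h3; set F0 := floor_half n; set F1 := floor_half1 n; set C := ceil_half1 n.
move=> h1 h2 h3.
split; [|split].
-
  set b := [seq _ | x <- a].
  have hb : forall p, 1 <= p <= n -> ith b p = n.+1 - ith a p.
    by move=> p hp; rewrite /b (ith_map _ hs hp).
  apply: good_intro.
  + by rewrite size_map.
  + move=> p hp; rewrite hb //; have := hr p hp; lia.
  + move=> p q hp hq; rewrite !hb //; have := hr p hp; have := hr q hq => ? ? ?.
    apply: hi => //; lia.
  + move=> p q hp hq; rewrite /Dd !hb; try lia.
    have := hr p ltac:(lia); have := hr q ltac:(lia);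
    have := hr p.+1 ltac:(lia); have := hr q.+1 ltac:(lia) => ? ? ? ? E.
    apply: hd => //; rewrite /Dd /absd; move: E; rewrite /absd; lia.
  + case: hc => hc; [right|left] => p hp; rewrite hb //;
    have [ho he] := hc p hp; have hrp := hr p hp;
    move: ho he hrp; case: (odd p) => /= ho he hrp; split => // _.
    * have := ho is_true_true; lia.
    * have := he is_true_true; lia.
    * have := ho is_true_true; lia.
    * have := he is_true_true; lia.
-
  move=> Hodd.
  have Hev : forall p, 1 <= p <= n -> ~~ odd p -> ith a p < C.
    move=> p hp hpe.
    case: hc => hc; first by case: (hc p hp) => _ /(_ hpe).
    have := hc p hp => -[_ /(_ hpe) hp2].
    have := Hodd 1 ltac:(lia) is_true_true.
    have := hc 1 ltac:(lia) => -[/(_ is_true_true) ? _].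
    have p2 : 2 <= p by case: p hp hpe hp2 => [|[|]].
    have [n2|n3] : n = 2 \/ 3 <= n by lia.
    * lia.
    * have := Hodd 3 ltac:(lia) is_true_true.
      have := hc 3 ltac:(lia) => -[/(_ is_true_true) ? _] ? ?.
      have : ith a 1 = ith a 3 by lia.
      by move/hi => /(_ ltac:(lia) ltac:(lia)).
  set b := [seq _ | i <- iota 0 n].
  have hb : forall p, 1 <= p <= n -> ith b p =
      if odd p then ith a p - F0 else ith a p + F1.
    by move=> p hp; rewrite /b (ith_iota (fun p => if odd p then ith a p - F0 else ith a p + F1)).
  have HA : forall p, 1 <= p <= n -> [/\ 1 <= ith a p <= n,
      odd p -> C <= ith a p & ~~ odd p -> ith a p < C].
    move=> p hp; split; [exact: hr|exact: Hodd|exact: Hev].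
  have HD : forall p, 1 <= p < n -> Dd b p + Dd a p = n.
    move=> p hp; rewrite /Dd !hb; try lia.
    have [r1 o1 e1] := HA p ltac:(lia); have [r2 o2 e2] := HA p.+1 ltac:(lia).
    move: o1 e1 o2 e2; rewrite /= /absd; case: (odd p) => /= o1 e1 o2 e2.
    - have := o1 is_true_true; have := e2 is_true_true; lia.
    - have := e1 is_true_true; have := o2 is_true_true; lia.
  apply: good_intro.
  + by rewrite size_map size_iota.
  + move=> p hp; rewrite hb //; have [r1 o1 e1] := HA p hp.
    move: o1 e1; case: (odd p) => /= o1 e1.
    - have := o1 is_true_true; lia.
    - have := e1 is_true_true; lia.
  + move=> p q hp hq; rewrite !hb //; have [r1 o1 e1] := HA p hp; have [r2 o2 e2] := HA q hq.
    move=> E; apply: hi => //; move: E o1 e1 o2 e2.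
    case: (odd p); case: (odd q) => /= E o1 e1 o2 e2.
    - lia.
    - have := o1 is_true_true; have := e2 is_true_true; lia.
    - have := e1 is_true_true; have := o2 is_true_true; lia.
    - lia.
  + move=> p q hp hq E; apply: hd => //; have := HD p hp; have := HD q hq; lia.
  + right => p hp; rewrite hb //; have [r1 o1 e1] := HA p hp.
    move: o1 e1; case: (odd p) => /= o1 e1; split => // _.
    - have := o1 is_true_true; lia.
    - have := e1 is_true_true; lia.
-
  move=> Hodd.
  have Hev : forall p, 1 <= p <= n -> ~~ odd p -> F1 < ith a p.
    move=> p hp hpe.
    case: hc => hc; last by case: (hc p hp) => _ /(_ hpe).
    have := hc p hp => -[_ /(_ hpe) hp2].
    have := Hodd 1 ltac:(lia) is_true_true.
    have := hc 1 ltac:(lia) => -[/(_ is_true_true) ? _].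
    have p2 : 2 <= p by case: p hp hpe hp2 => [|[|]].
    have [n2|n3] : n = 2 \/ 3 <= n by lia.
    * lia.
    * have := Hodd 3 ltac:(lia) is_true_true.
      have := hc 3 ltac:(lia) => -[/(_ is_true_true) ? _] ? ?.
      have : ith a 1 = ith a 3 by lia.
      by move/hi => /(_ ltac:(lia) ltac:(lia)).
  set b := [seq _ | i <- iota 0 n].
  have hb : forall p, 1 <= p <= n -> ith b p =
      if odd p then ith a p + F0 else ith a p - F1.
    by move=> p hp; rewrite /b (ith_iota (fun p => if odd p then ith a p + F0 else ith a p - F1)).
  have HA : forall p, 1 <= p <= n -> [/\ 1 <= ith a p <= n,
      odd p -> ith a p <= F1 & ~~ odd p -> F1 < ith a p].
    move=> p hp; split; [exact: hr|exact: Hodd|exact: Hev].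
  have HD : forall p, 1 <= p < n -> Dd b p + Dd a p = n.
    move=> p hp; rewrite /Dd !hb; try lia.
    have [r1 o1 e1] := HA p ltac:(lia); have [r2 o2 e2] := HA p.+1 ltac:(lia).
    move: o1 e1 o2 e2; rewrite /= /absd; case: (odd p) => /= o1 e1 o2 e2.
    - have := o1 is_true_true; have := e2 is_true_true; lia.
    - have := e1 is_true_true; have := o2 is_true_true; lia.
  apply: good_intro.
  + by rewrite size_map size_iota.
  + move=> p hp; rewrite hb //; have [r1 o1 e1] := HA p hp.
    move: o1 e1; case: (odd p) => /= o1 e1.
    - have := o1 is_true_true; lia.
    - have := e1 is_true_true; lia.
  + move=> p q hp hq; rewrite !hb //; have [r1 o1 e1] := HA p hp; have [r2 o2 e2] := HA q hq.
    move=> E; apply: hi => //; move: E o1 e1 o2 e2.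
    case: (odd p); case: (odd q) => /= E o1 e1 o2 e2.
    - lia.
    - have := o1 is_true_true; have := e2 is_true_true; lia.
    - have := e1 is_true_true; have := o2 is_true_true; lia.
    - lia.
  + move=> p q hp hq E; apply: hd => //; have := HD p hp; have := HD q hq; lia.
  + left => p hp; rewrite hb //; have [r1 o1 e1] := HA p hp.
    move: o1 e1; case: (odd p) => /= o1 e1; split => // _.
    - have := o1 is_true_true; lia.
    - have := e1 is_true_true; lia.
Qed.
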